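(* Let $n\ge2$, $\epsilon\in[-1,1]$, $h\in[0,1]$. For $0\le p\le 2n$, $$\min_{\sigma\in\mathcal C(p)}H(\sigma)=\begin{cases}n-(p-n)^2-p^2-\epsilon(n-2p)-2h(p-n) & 0\le p\le n,\\ n-(2n-p)^2-(p-n)^2-\epsilon(2p-3n)-2h(p-n) & n\le p\le 2n.\end{cases}$$ Moreover, for $0\le p\le n$ this minimum is attained on $C(p,0,0)$ and on $C(0,p,0)$, and for $n\le p\le 2n$ it is attained on $C(n,p-n,p-n)$ and on $C(p-n,n,p-n)$.
   Context: The graph $\mathcal G(2,n)$ has vertex set $V=V^{(1)}\cup V^{(2)}$ with $V^{(1)}=\{1,\dots,n\}$, $V^{(2)}=\{n+1,\dots,2n\}$; its edge set is $E=E_{\mathrm{int}}\cup E_{\mathrm{cross}}$, where $E_{\mathrm{int}}$ consists of all pairs of distinct vertices in the same $V^{(k)}$ and $E_{\mathrm{cross}}=\{\{i,i+n\}:1\le i\le n\}$. For $\sigma\in\{-1,+1\}^V$, $H(\sigma)=-\sum_{\{i,j\}\in E_{\mathrm{int}}}\sigma_i\sigma_j-\epsilon\sum_{\{i,j\}\in E_{\mathrm{cross}}}\sigma_i\sigma_j-h\sum_{i\in V}\sigma_i$. $C(p_1,p_2,a)$ is the set of configurations with exactly $p_1$ vertices of spin $+1$ in $V^{(1)}$, exactly $p_2$ vertices of spin $+1$ in $V^{(2)}$, and exactly $a$ cross-edges both of whose endpoints have spin $+1$. $\mathcal C(p)$ is the set of configurations with exactly $p$ vertices of spin $+1$ in $V$.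 *)

(* Defs.v *)
From mathcomp Require Import all_boot all_order all_algebra.
Set Implicit Arguments. Unset Strict Implicit. Unset Printing Implicit Defensive.
Import Order.TTheory GRing.Theory Num.Theory.
Local Open Scope ring_scope.

(* The graph G(2,n): vertex set 'I_(n + n).  V^(1) = {lshift n i | i : 'I_n}
   (vertices 0..n-1, i.e. paper's 1..n), V^(2) = {rshift n i | i : 'I_n}
   (vertices n..2n-1, i.e. paper's n+1..2n).  Cross edge {i, i+n} is
   {lshift n i, rshift n i}. *)

Definition config (n : nat) := {ffun 'I_(n + n) -> bool}.

Definition spin (R : numDomainType) (n : nat) (s : config n) (v : 'I_(n + n)) : R :=
  if s v then 1 else -1.

Definition same_part (n : nat) (u v : 'I_(n + n)) : bool := (u < n)%N == (v < n)%N.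

(* Hamiltonian: internal edges = unordered pairs {u,v}, u<v, in the same part. *)
Definition Ham (R : numDomainType) (n : nat) (eps h : R) (s : config n) : R :=
  - (\sum_(u : 'I_(n + n)) \sum_(v : 'I_(n + n) | (u < v)%N && same_part u v)
        spin R s u * spin R s v)
  - eps * (\sum_(i < n) spin R s (lshift n i) * spin R s (rshift n i))
  - h * (\sum_(v : 'I_(n + n)) spin R s v).

Definition inCp (n p : nat) (s : config n) : bool :=
  #|[set v : 'I_(n + n) | s v]| == p.

Definition inC3 (n p1 p2 a : nat) (s : config n) : bool :=
  [&& #|[set i : 'I_n | s (lshift n i)]| == p1,
      #|[set i : 'I_n | s (rshift n i)]| == p2 &
      #|[set i : 'I_n | s (lshift n i) && s (rshift n i)]| == a].

Definition minH (R : numDomainType) (n p : nat) (eps h : R) : R :=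
  let n' := n%:R in let p' := p%:R in
  if (p <= n)%N then
    n' - (p' - n') ^+ 2 - p' ^+ 2 - eps * (n' - 2 * p') - 2 * h * (p' - n')
  else
    n' - (2 * n' - p') ^+ 2 - (p' - n') ^+ 2 - eps * (2 * p' - 3 * n')
      - 2 * h * (p' - n').

Definition is_min_on (R : numDomainType) (n : nat) (eps h : R)
    (C : config n -> bool) (m : R) : Prop :=
  (exists2 s, C s & Ham eps h s = m) /\ (forall s, C s -> m <= Ham eps h s).

(* "the minimum m is attained on the set C": C is nonempty and H = m on it
   (H is constant on each C(p1,p2,a)). *)
Definition attained_on (R : numDomainType) (n : nat) (eps h : R)
    (C : config n -> bool) (m : R) : Prop :=
  (exists s, C s) /\ (forall s, C s -> Ham eps h s = m).

Arguments inCp : clear implicits.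
Arguments inC3 : clear implicits.

(* Main.v *)
Require Import Defs.
From mathcomp Require Import all_boot all_order all_algebra.
From mathcomp Require Import zify ring lra.
Import Order.TTheory GRing.Theory Num.Theory.
Local Open Scope ring_scope.

Lemma sum_ind (R : numDomainType) (T : finType) (P : pred T) :
  \sum_(i : T) (if P i then 1 else 0 : R) = #|[set i | P i]|%:R.
Proof.
rewrite -big_mkcond /= -[in RHS]sum1_card natr_sum.
by apply: eq_bigl => i; rewrite inE.
Qed.

Lemma spinE (R : numDomainType) n (s : config n) v :
  spin R s v = 2 * (if s v then 1 else 0) - 1.
Proof. by rewrite /spin; case: (s v); ring. Qed.

Lemma spin2 (R : numDomainType) n (s : config n) v :
  spin R s v * spin R s v = 1.
Proof. by rewrite /spin; case: (s v); ring. Qed.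

Lemma pair_sum (R : numDomainType) m (F : 'I_m -> 'I_m -> R) :
  (forall u v, F u v = F v u) ->
  2 * \sum_(u : 'I_m) \sum_(v : 'I_m | (u < v)%N) F u v = \sum_u \sum_v F u v - \sum_u F u u.
Proof.
move=> FS.
have E : forall u : 'I_m, \sum_v F u v =
   \sum_(v : 'I_m | (u < v)%N) F u v + \sum_(v : 'I_m | (v < u)%N) F u v + F u u.
  move=> u; rewrite (bigD1 u) //= addrC; congr (_ + _).
  rewrite (bigID (fun v : 'I_m => (u < v)%N)) /=; congr (_ + _); apply: eq_bigl => v;
  rewrite -val_eqE /=; case: ltngtP => //.
rewrite (eq_bigr _ (fun u _ => E u)) !big_split /=.
have -> : \sum_(u : 'I_m) \sum_(v : 'I_m | (v < u)%N) F u v = \sum_(u : 'I_m) \sum_(v : 'I_m | (u < v)%N) F u v.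
  rewrite (eq_bigr (fun u : 'I_m => \sum_(v : 'I_m) (if (v < u)%N then F u v else 0)));
    last by move=> u _; rewrite big_mkcond.
  rewrite (exchange_big _ _ _ _ _ (fun i v : 'I_m => if (v < i)%N then F i v else 0)) /=. apply: eq_bigr => u _; rewrite [RHS]big_mkcond /=.
  by apply: eq_bigr => v _; rewrite FS.
by rewrite addrK mulr2n mulrDl mul1r.
Qed.

Lemma sp_ll n (i j : 'I_n) : same_part (lshift n i) (lshift n j) = true.
Proof. by rewrite /same_part /= !ltn_ord. Qed.
Lemma sp_lr n (i j : 'I_n) : same_part (lshift n i) (rshift n j) = false.
Proof. by rewrite /same_part /= ltn_ord ltnNge leq_addr. Qed.
Lemma sp_rl n (i j : 'I_n) : same_part (rshift n i) (lshift n j) = false.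
Proof. by rewrite /same_part /= ltn_ord ltnNge leq_addr. Qed.
Lemma sp_rr n (i j : 'I_n) : same_part (rshift n i) (rshift n j) = true.
Proof. by rewrite /same_part /= ltnNge leq_addr ltnNge leq_addr. Qed.

Lemma internal (R : numDomainType) n (s : config n) :
 2 * (\sum_(u : 'I_(n+n)) \sum_(v : 'I_(n+n) | (u < v)%N && same_part u v) spin R s u * spin R s v)
 = (\sum_(i<n) spin R s (lshift n i))^+2 + (\sum_(i<n) spin R s (rshift n i))^+2 - (n+n)%:R.
Proof.
set f := spin R s.
pose F u v := if same_part u v then f u * f v else 0.
rewrite (eq_bigr (fun u : 'I_(n+n) => \sum_(v : 'I_(n+n) | (u < v)%N) F u v)); last by move=> u _; rewrite big_mkcondr.
rewrite pair_sum; last by move=> u v; rewrite /F /same_part eq_sym mulrC.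
congr (_ - _).
  rewrite big_split_ord /= !expr2 !mulr_suml; congr (_ + _); apply: eq_bigr => i _;
  rewrite big_split_ord /= /F.
    rewrite (eq_bigr (fun j => f (lshift n i) * f (lshift n j))) => [|j _]; rewrite ?sp_ll //.
    by rewrite [X in _ + X]big1 => [|j _]; rewrite ?sp_lr // addr0 mulr_sumr.
  rewrite [X in X + _]big1 => [|j _]; rewrite ?sp_rl // add0r mulr_sumr.
  by apply: eq_bigr => j _; rewrite sp_rr.
rewrite (eq_bigr (fun _ => 1)) => [|u _]; first by rewrite sumr_const card_ord.
by rewrite /F /same_part eqxx spin2.
Qed.

Definition cL n (s : config n) := #|[set i : 'I_n | s (lshift n i)]|.
Definition cR n (s : config n) := #|[set i : 'I_n | s (rshift n i)]|.
Definition cB n (s : config n) := #|[set i : 'I_n | s (lshift n i) && s (rshift n i)]|.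

Lemma sumS (R : numDomainType) n (s : config n) (g : 'I_n -> 'I_(n+n)) :
  \sum_(i<n) spin R s (g i) = 2 * #|[set i | s (g i)]|%:R - n%:R.
Proof.
rewrite (eq_bigr _ (fun i _ => spinE _ _ _ _)) sumrB -mulr_sumr sum_ind.
by rewrite sumr_const card_ord.
Qed.

Lemma crossE (R : numDomainType) n (s : config n) :
  \sum_(i<n) spin R s (lshift n i) * spin R s (rshift n i) =
  n%:R - 2 * (cL n s)%:R - 2 * (cR n s)%:R + 4 * (cB n s)%:R.
Proof.
rewrite (eq_bigr (fun i => 1 - 2 * (if s (lshift n i) then 1 else 0)
   - 2 * (if s (rshift n i) then 1 else 0)
   + 4 * (if s (lshift n i) && s (rshift n i) then 1 else 0))) => [|i _].
  by rewrite big_split /= !sumrB -!mulr_sumr !sum_ind sumr_const card_ord.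
by rewrite /spin; case: (s (lshift n i)); case: (s (rshift n i)) => /=; ring.
Qed.

Lemma cardE n (s : config n) : #|[set v : 'I_(n+n) | s v]| = (cL n s + cR n s)%N.
Proof.
rewrite /cL /cR -!sum1_card big_split_ord /=.
by congr (_ + _); apply: eq_bigl => i; rewrite !inE.
Qed.

Lemma HamE (R : realFieldType) n (eps h : R) (s : config n) :
  Ham eps h s = n%:R - ((2 * (cL n s)%:R - n%:R)^+2 + (2 * (cR n s)%:R - n%:R)^+2) / 2
   - eps * (n%:R - 2 * (cL n s)%:R - 2 * (cR n s)%:R + 4 * (cB n s)%:R)
   - h * (2 * (cL n s)%:R + 2 * (cR n s)%:R - 2 * n%:R).
Proof.
have I := internal R n s.
rewrite /Ham crossE [\sum_(v < n + n) spin R s v]big_split_ord /= (sumS R n s (lshift n)) (sumS R n s (fun i => rshift n i)).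
move: I; rewrite (sumS R n s (lshift n)) (sumS R n s (fun i => rshift n i)) natrD.
set X := \sum_(u : 'I_(n+n)) _.
rewrite /cL /cR.
move=> I; lra.
Qed.

Lemma cons n (s : config n) :
  [/\ (cB n s <= cL n s)%N, (cB n s <= cR n s)%N, (cL n s + cR n s <= n + cB n s)%N,
      (cL n s <= n)%N & (cR n s <= n)%N].
Proof.
have cn : forall A : {set 'I_n}, (#|A| <= n)%N.
  by move=> A; rewrite (leq_trans (max_card _)) // card_ord.
split; rewrite /cL /cR /cB ?cn //.
- by apply: subset_leq_card; apply/subsetP => i; rewrite !inE => /andP[].
- by apply: subset_leq_card; apply/subsetP => i; rewrite !inE => /andP[].
rewrite -cardsUI.
have -> : [set i | s (lshift n i) && s (rshift n i)] =
   [set i | s (lshift n i)] :&: [set i | s (rshift n i)].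
  by apply/setP => i; rewrite !inE.
by rewrite leq_add2r cn.
Qed.

Lemma natprod (x y z : nat) : (x <= y)%N -> (x <= z)%N -> (x <= y * z)%N.
Proof. by case: z => [|z]; [rewrite leqn0 => _ /eqP -> | move=> H _; rewrite (leq_trans H) // leq_pmulr]. Qed.

Lemma card_lt n k : (k <= n)%N -> #|[set i : 'I_n | (i < k)%N]| = k.
Proof.
move=> kn.
have -> : [set i : 'I_n | (i < k)%N] = [set widen_ord kn j | j in 'I_k].
  apply/setP => i; rewrite inE; apply/idP/imsetP => [ik|[j _ ->]]; last exact: (ltn_ord j).
  by exists (Ordinal ik) => //; apply: val_inj.
by rewrite card_imset ?card_ord //; by move=> x y /(congr1 val) /= xy; apply: val_inj.
Qed.

Definition mk n k1 k2 : config n :=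
  [ffun v : 'I_(n+n) => match split v with inl i => (i < k1)%N | inr i => (i < k2)%N end].

Lemma mk_C3 n k1 k2 : (k1 <= n)%N -> (k2 <= n)%N ->
  inC3 n k1 k2 (minn k1 k2) (mk n k1 k2).
Proof.
move=> h1 h2; rewrite /inC3.
have L : forall i : 'I_n, mk n k1 k2 (lshift n i) = (i < k1)%N.
  by move=> i; rewrite /mk ffunE (unsplitK (inl i)).
have R : forall i : 'I_n, mk n k1 k2 (rshift n i) = (i < k2)%N.
  by move=> i; rewrite /mk ffunE (unsplitK (inr i)).
have -> : [set i | mk n k1 k2 (lshift n i)] = [set i : 'I_n | (i < k1)%N].
  by apply/setP => i; rewrite !inE L.
have -> : [set i | mk n k1 k2 (rshift n i)] = [set i : 'I_n | (i < k2)%N].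
  by apply/setP => i; rewrite !inE R.
have -> : [set i | mk n k1 k2 (lshift n i) && mk n k1 k2 (rshift n i)]
    = [set i : 'I_n | (i < minn k1 k2)%N].
  by apply/setP => i; rewrite !inE L R leq_min.
rewrite !card_lt ?eqxx //.
by rewrite geq_min h1.
Qed.

Arguments mk_C3 {n k1 k2}.
Arguments cons {n}.

Definition Fv {R : realFieldType} n (eps h : R) (p1 p2 a : nat) : R :=
  n%:R - ((2 * p1%:R - n%:R)^+2 + (2 * p2%:R - n%:R)^+2) / 2
   - eps * (n%:R - 2 * p1%:R - 2 * p2%:R + 4 * a%:R)
   - h * (2 * p1%:R + 2 * p2%:R - 2 * n%:R).

Lemma HamC3 (R : realFieldType) n (eps h : R) p1 p2 a (s : config n) :
  inC3 n p1 p2 a s -> Ham eps h s = Fv n eps h p1 p2 a.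
Proof.
by rewrite /inC3 => /and3P[/eqP e1 /eqP e2 /eqP e3]; rewrite HamE /Fv -e1 -e2 -e3.
Qed.

Theorem proposition5p4 (R : realFieldType) (n : nat) (eps h : R) :
  (2 <= n)%N -> -1 <= eps <= 1 -> 0 <= h <= 1 ->
  forall p : nat, (p <= 2 * n)%N ->
    is_min_on eps h (inCp n p) (minH n p eps h) /\
    ((p <= n)%N ->
       attained_on eps h (inC3 n p 0 0) (minH n p eps h) /\
       attained_on eps h (inC3 n 0 p 0) (minH n p eps h)) /\
    ((n <= p)%N ->
       attained_on eps h (inC3 n n (p - n) (p - n)) (minH n p eps h) /\
       attained_on eps h (inC3 n (p - n) n (p - n)) (minH n p eps h)).
Proof.
move=> n2 /andP[e1 e2] /andP[h0 h1] p Hp.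
have EQ1 : (p <= n)%N -> Fv n eps h p 0 0 = minH n p eps h /\ Fv n eps h 0 p 0 = minH n p eps h.
  move=> pn; rewrite /Fv /minH pn /=; split; lra.
have EQ2 : (n <= p)%N -> Fv n eps h n (p - n) (p - n) = minH n p eps h /\
                         Fv n eps h (p - n) n (p - n) = minH n p eps h.
  move=> np; rewrite /Fv /minH; case: leqP => pn.
    have -> : p = n by apply/eqP; rewrite eqn_leq pn np.
    rewrite subnn /=; split; lra.
  rewrite natrB //; split; lra.
have LB : forall s, inCp n p s -> minH n p eps h <= Ham eps h s.
  move=> s; rewrite /inCp cardE => /eqP <-; rewrite HamE.
  case: (cons s) => c1 c2 c3 c4 c5.
  have ea : 0 <= (1 - eps) * (cB n s)%:R by rewrite mulr_ge0 // subr_ge0.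
  rewrite /minH natrD; case: leqP => pn.
    have uv : (cB n s)%:R <= (cL n s)%:R * (cR n s)%:R :> R.
      by rewrite -natrM ler_nat natprod.
    lra.
  have uv : ((n + cB n s) - (cL n s + cR n s))%N%:R <= (n - cL n s)%N%:R * (n - cR n s)%N%:R :> R.
    by rewrite -natrM ler_nat natprod //; lia.
  have ea2 : 0 <= (1 - eps) * ((n + cB n s) - (cL n s + cR n s))%N%:R by rewrite mulr_ge0 // subr_ge0.
  move: uv ea2; rewrite !natrB // !natrD => uv ea2.
  lra.
split.
  split=> //.
  case: (leqP p n) => pn.
    exists (mk n p 0).
      by rewrite /inCp cardE /cL /cR; case/and3P: (mk_C3 pn (leq0n n)) => /eqP -> /eqP -> _; rewrite addn0.
    by rewrite (HamC3 R n eps h _ _ _ _ (mk_C3 pn (leq0n n))) minn0 (EQ1 pn).1.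
  have np : (n <= p)%N by apply: ltnW.
  have pn' : (p - n <= n)%N by lia.
  exists (mk n n (p - n)).
    by rewrite /inCp cardE /cL /cR; case/and3P: (mk_C3 (leqnn n) pn') => /eqP -> /eqP -> _; rewrite subnKC.
  by rewrite (HamC3 R n eps h _ _ _ _ (mk_C3 (leqnn n) pn')) (minn_idPr pn') (EQ2 np).1.
split.
  move=> pn; have [E1 E2] := EQ1 pn; split; split.
  - by exists (mk n p 0); have := mk_C3 pn (leq0n n); rewrite minn0.
  - by move=> s /HamC3 ->.
  - by exists (mk n 0 p); have := mk_C3 (leq0n n) pn; rewrite min0n.
  - by move=> s /HamC3 ->.
move=> np; have [E1 E2] := EQ2 np.
have pn' : (p - n <= n)%N by lia.
split; split.
- by exists (mk n n (p - n)); have := mk_C3 (leqnn n) pn'; rewrite (minn_idPr pn').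
- by move=> s /HamC3 ->.
- by exists (mk n (p - n) n); have := mk_C3 pn' (leqnn n); rewrite (minn_idPl pn').
- by move=> s /HamC3 ->.
Qed.
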